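(* Let $n\ge 4$, $\bar K>0$, and let $M$ be an $n$-dimensional submanifold of $\mathbb{S}^{n+p}(1/\sqrt{\bar K})$ satisfying $|\mathring A|^2<\mathring a(|H|^2)-\epsilon\omega$ for some $\epsilon>0$, where $\omega=\frac{|H|^2}{n-1}+2n\bar K$. Then the Ricci curvature of $M$ satisfies $\operatorname{Ric}_M\ge\frac{n-1}{n}\epsilon\,\omega>\frac{\epsilon}{n}|H|^2$.
   Context: $A$ is the second fundamental form, $H$ the mean curvature vector, $\mathring A=A-\frac Hn g$. For $x\ge0$: $a(x)=\sqrt{\big(\frac{x}{n-1}+2\bar K\big)^2+(2n-4)\bar K^2}$, $\mathring a(x)=a(x)-\frac xn$. *)

(* Defs.v *)
From HB Require Import structures.
From mathcomp Require Import all_boot all_order all_algebra.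
From mathcomp Require Import reals.
Set Implicit Arguments. Unset Strict Implicit. Unset Printing Implicit Defensive.
Import Order.TTheory GRing.Theory Num.Theory.
Local Open Scope ring_scope.

Section Defs.
Variable R : realType.
Variables n p : nat.

(* A point of M is modelled by the second fundamental form in an orthonormal
   tangent frame e_1..e_n and an orthonormal normal frame nu_1..nu_p:
   A(e_i,e_j) = \sum_alpha (A alpha i j) nu_alpha, each A alpha symmetric. *)
Definition sff := 'I_p -> 'M[R]_n.

Definition sff_sym (A : sff) : Prop := forall alpha, (A alpha)^T = A alpha.

Definition meanH (A : sff) (alpha : 'I_p) : R := \tr (A alpha).

Definition normH2 (A : sff) : R := \sum_(alpha < p) (meanH A alpha) ^+ 2.

Definition normAo2 (A : sff) : R :=
  \sum_(alpha < p) \sum_(i < n) \sum_(j < n)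
     (A alpha i j - (i == j)%:R * meanH A alpha / n%:R) ^+ 2.

Definition a_fun (K x : R) : R :=
  Num.sqrt ((x / (n%:R - 1) + 2 * K) ^+ 2 + (2 * n%:R - 4) * K ^+ 2).
Definition ao_fun (K x : R) : R := a_fun K x - x / n%:R.

(* Ricci curvature Ric(v,v) of M in S^{n+p}(1/sqrt K), given by the Gauss
   equation: (n-1) K |v|^2 + <A(v,v), H> - \sum_j |A(v,e_j)|^2. *)
Definition ricci (K : R) (A : sff) (v : 'cV[R]_n) : R :=
  (n%:R - 1) * K * (v^T *m v) 0 0 +
  \sum_(alpha < p) (meanH A alpha * (v^T *m A alpha *m v) 0 0
                     - ((A alpha *m v)^T *m (A alpha *m v)) 0 0).

End Defs.

(* Main.v *)
Require Import Defs.
From HB Require Import structures.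
From mathcomp Require Import all_boot all_order all_algebra.
From mathcomp Require Import reals.
From mathcomp Require Import ring lra.
Import Order.TTheory GRing.Theory Num.Theory.
Local Open Scope ring_scope.
Section Mx.
Variable R : realType.
Variable n : nat.

Lemma tr11 (X : 'M[R]_1) : \tr X = X 0 0.
Proof. exact: trace_mx11. Qed.

Lemma trB k (X Y : 'M[R]_k) : \tr (X - Y) = \tr X - \tr Y.
Proof. by rewrite /mxtrace -sumrB; apply: eq_bigr => i _; rewrite !mxE. Qed.

Lemma tr_sq_ge0 m (X : 'M[R]_(m, n)) : 0 <= \tr (X *m X^T).
Proof.
rewrite /mxtrace; apply: sumr_ge0 => i _; rewrite mxE.
apply: sumr_ge0 => j _; rewrite mxE -expr2; exact: sqr_ge0.
Qed.

Lemma col_sq_ge0 (u : 'cV[R]_n) : 0 <= (u^T *m u) 0 0.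
Proof. by rewrite -tr11 -{2}(trmxK u); apply: tr_sq_ge0. Qed.

Lemma m11 (X : 'M[R]_1) : X = (X 0 0)%:M.
Proof. exact: mx11_scalar. Qed.

Variable B : 'M[R]_n.
Variable v : 'cV[R]_n.
Hypothesis Bsym : B^T = B.
Hypothesis hv : v^T *m v = 1%:M.

Let w := B *m v.
Let q := (v^T *m B *m v) 0 0.
Let r := (w^T *m w) 0 0.

Lemma vw : v^T *m w = q%:M.
Proof. by rewrite mulmxA; exact: m11. Qed.

Lemma wv : w^T *m v = q%:M.
Proof. by rewrite /w trmx_mul Bsym; exact: m11. Qed.

Lemma ww : w^T *m w = r%:M.
Proof. exact: m11. Qed.

Lemma F1 : q ^+ 2 <= r.
Proof.
have := col_sq_ge0 (w - q *: v).
rewrite (raddfB (@trmx R n 1)) /= linearZ /= mulmxBl !mulmxBr -!scalemxAl -!scalemxAr.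
rewrite ww wv vw hv !mxE /= !mulr1n !mulr1.
move=> H; lra.
Qed.

Let P : 'M[R]_n := 1%:M - v *m v^T.

Lemma PT : P^T = P.
Proof. by rewrite /P linearB /= trmx1 trmx_mul trmxK. Qed.

Lemma PP : P *m P = P.
Proof.
rewrite /P mulmxBl !mulmxBr !mul1mx mulmx1 mulmxA -(mulmxA v) hv mulmx1.
by rewrite subrr subr0.
Qed.

Lemma trP : \tr P = n%:R - 1.
Proof. by rewrite /P linearB /= mxtrace1 mxtrace_mulC hv tr11 mxE. Qed.


Hypothesis hn : (1 < n)%N.
Let S := \tr (B *m B^T).
Let h := \tr B.

Lemma wT : w^T = v^T *m B.
Proof. by rewrite /w trmx_mul Bsym. Qed.

Lemma trBP : \tr (B *m P) = h - q.
Proof.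
rewrite /P mulmxBr mulmx1 trB mulmxA (mxtrace_mulC (B *m v)) mulmxA.
by rewrite tr11.
Qed.

Lemma trPBP : \tr (P *m B *m P) = h - q.
Proof. by rewrite mxtrace_mulC mulmxA PP mxtrace_mulC trBP. Qed.

Lemma trBw : \tr (B *m (w *m v^T)) = r.
Proof.
by rewrite mulmxA mxtrace_mulC mulmxA -wT tr11.
Qed.

Lemma trwB : \tr ((w *m v^T) *m B) = r.
Proof. by rewrite mxtrace_mulC trBw. Qed.

Lemma trww : \tr ((w *m v^T) *m (w *m v^T)) = q * q.
Proof.
rewrite mulmxA -(mulmxA w) vw mul_mx_scalar -scalemxAl mxtraceZ.
by rewrite mxtrace_mulC vw tr11 mxE mulr1n.
Qed.

Lemma trBPBP : \tr (B *m P *m (B *m P)) = S - 2 * r + q ^+ 2.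
Proof.
have -> : B *m P = B - w *m v^T by rewrite /P mulmxBr mulmx1 mulmxA.
rewrite mulmxBl !mulmxBr !trB trBw trwB trww /S Bsym.
by rewrite expr2; ring.
Qed.

Lemma trNN : \tr (P *m B *m P *m (P *m B *m P)) = S - 2 * r + q ^+ 2.
Proof.
have -> : P *m B *m P *m (P *m B *m P) = P *m (B *m P *m (B *m P)).
  by rewrite -!mulmxA (mulmxA P P) PP.
rewrite mxtrace_mulC -!mulmxA PP -trBPBP -!mulmxA //.
Qed.

Lemma F2 : (h - q) ^+ 2 <= (n%:R - 1) * (S - 2 * r + q ^+ 2).
Proof.
set N := P *m B *m P.
set t := (h - q) / (n%:R - 1).
have hn1 : 0 < n%:R - 1 :> R.
  by rewrite subr_gt0 (_ : 1 = 1%:R) // ltr_nat.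
have NT : N^T = N by rewrite /N !trmx_mul PT Bsym mulmxA.
have XT : (N - t *: P)^T = N - t *: P.
  by rewrite (raddfB (@trmx R n n)) /= linearZ /= NT PT.
have H := @tr_sq_ge0 n (N - t *: P).
rewrite XT mulmxBl !mulmxBr -!scalemxAl -!scalemxAr !trB !mxtraceZ in H.
have e1 : \tr (N *m P) = h - q by rewrite /N -mulmxA PP trPBP.
have e2 : \tr (P *m N) = h - q by rewrite /N !mulmxA PP trPBP.
rewrite e1 e2 PP trP trNN in H.
have -> : (h - q) ^+ 2 = t ^+ 2 * (n%:R - 1) ^+ 2.
  by rewrite /t expr_div_n mulrAC -mulrA divff ?mulr1 // expf_neq0 // gt_eqF.
rewrite /t in H.
set c := n%:R - 1 in H hn1 *.
set u := h - q in H *.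
set Z := S - 2 * r + q ^+ 2 in H *.
have ht : u = t * c by rewrite /t /u divfK // gt_eqF.
rewrite ht in H.
rewrite !mulfK ?gt_eqF // in H. nra.
Qed.

End Mx.

Section Sc.
Variable R : realType.

Lemma keyD (N K x a : R) : 4 <= N -> 0 < K -> 0 <= x -> 0 <= a ->
  a ^+ 2 = (x / (N - 1) + 2 * K) ^+ 2 + (2 * N - 4) * K ^+ 2 ->
  a <= N * K + 2 * x / N.
Proof.
move=> N4 K0 x0 a0 ha.
have N0 : N != 0 by apply/eqP; lra.
have N1 : N - 1 != 0 by apply/eqP; lra.
have E0 : 0 <= N * K + 2 * x / N.
  apply: addr_ge0; first by nra.
  by apply: divr_ge0; lra.
suff : a ^+ 2 <= (N * K + 2 * x / N) ^+ 2 by nra.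
have -> : (N * K + 2 * x / N) ^+ 2 = a ^+ 2 + ((N ^+ 2 - 2 * N) * K ^+ 2 +
   4 * x * K * ((N - 2) / (N - 1)) + x ^+ 2 * ((3 * N ^+ 2 - 8 * N + 4) / (N ^+ 2 * (N - 1) ^+ 2))).
  by rewrite ha; field; rewrite N0 N1.
rewrite lerDl.
have h1 : 0 <= (N ^+ 2 - 2 * N) * K ^+ 2 by apply: mulr_ge0; nra.
have h2 : 0 <= 4 * x * K * ((N - 2) / (N - 1)).
  by apply: mulr_ge0; [nra | apply: divr_ge0; lra].
have h3 : 0 <= x ^+ 2 * ((3 * N ^+ 2 - 8 * N + 4) / (N ^+ 2 * (N - 1) ^+ 2)).
  by apply: mulr_ge0; [nra | apply: divr_ge0; nra].
lra.
Qed.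

Lemma keyQ (N K x a : R) : 4 <= N -> 0 < K -> 0 <= x -> 0 <= a ->
  a ^+ 2 = (x / (N - 1) + 2 * K) ^+ 2 + (2 * N - 4) * K ^+ 2 ->
  (N - 2) ^+ 2 * x * (a - x / N) <= N * (N - 1) * (N * K + 2 * x / N - a) ^+ 2.
Proof.
move=> N4 K0 x0 a0 ha.
have N0 : N != 0 by apply/eqP; lra.
have N1 : N - 1 != 0 by apply/eqP; lra.
set E := N * K + 2 * x / N.
set A2 := (x / (N - 1) + 2 * K) ^+ 2 + (2 * N - 4) * K ^+ 2.
set P := N * (N - 1) * (E ^+ 2 + A2) + (N - 2) ^+ 2 * x ^+ 2 / N.
set Q := 2 * N * (N - 1) * E + (N - 2) ^+ 2 * x.
have E0 : 0 <= E.
  apply: addr_ge0; first by nra.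
  by apply: divr_ge0; lra.
have P0 : 0 <= P.
  apply: addr_ge0; first by apply: mulr_ge0; [nra | apply: addr_ge0; [exact: sqr_ge0 | rewrite /A2 -ha; exact: sqr_ge0]].
  by apply: divr_ge0; nra.
have Q0 : 0 <= Q by apply: addr_ge0; apply: mulr_ge0 => //; nra.
have id1 : P ^+ 2 - Q ^+ 2 * A2 = (N ^+ 2 * (N - 1) * (N - 2)) ^+ 2 * K ^+ 4.
  by rewrite /P /Q /A2 /E; field; rewrite N0 N1.
have : (Q * a) ^+ 2 <= P ^+ 2.
  rewrite exprMn ha -/A2.
  have : 0 <= (N ^+ 2 * (N - 1) * (N - 2)) ^+ 2 * K ^+ 4.
    by apply: mulr_ge0; apply: exprn_ge0; [nra | lra].
  lra.
have Qa0 : 0 <= Q * a by apply: mulr_ge0.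
move=> hsq.
have hPQ : Q * a <= P by nra.
rewrite -subr_ge0. have -> : N * (N - 1) * (E - a) ^+ 2 - (N - 2) ^+ 2 * x * (a - x / N) = P - Q * a.
  by rewrite /P /Q /A2 -ha; field; rewrite N0.
lra.
Qed.

Lemma perA (N h q r S : R) : 4 <= N -> q ^+ 2 <= r ->
  (h - q) ^+ 2 <= (N - 1) * (S - 2 * r + q ^+ 2) ->
  (N - 1) / N ^+ 2 * h ^+ 2 + (N - 2) / N * (h * (q - h / N)) - (S - h ^+ 2 / N) / 2
    - (N - 2) / (2 * (N - 1)) * (q - h / N) ^+ 2 <= h * q - r /\
  (q - h / N) ^+ 2 <= (N - 1) / N * (S - h ^+ 2 / N).
Proof.
move=> N4 F1 F2.
have N0 : N != 0 by apply/eqP; lra.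
have N1 : N - 1 != 0 by apply/eqP; lra.
set sl := S - 2 * r + q ^+ 2 - (h - q) ^+ 2 / (N - 1).
have sl0 : 0 <= sl.
  rewrite /sl subr_ge0 ler_pdivrMr; last by lra.
  by rewrite mulrC.
split; rewrite -subr_ge0.
  have -> : h * q - r - ((N - 1) / N ^+ 2 * h ^+ 2 + (N - 2) / N * (h * (q - h / N))
     - (S - h ^+ 2 / N) / 2 - (N - 2) / (2 * (N - 1)) * (q - h / N) ^+ 2) = sl / 2.
    by rewrite /sl; field; rewrite N0 N1.
  lra.
have -> : (N - 1) / N * (S - h ^+ 2 / N) - (q - h / N) ^+ 2 =
   (N - 1) / N * (2 * (r - q ^+ 2) + sl).
  by rewrite /sl; field; rewrite N0 N1.
apply: mulr_ge0; first by apply: divr_ge0; lra.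
lra.
Qed.

Lemma final (N K x y T Z a Sum eps om : R) :
 4 <= N -> 0 < K -> 0 < eps -> 0 <= x -> 0 <= y ->
 om = x / (N - 1) + 2 * N * K ->
 0 <= a -> a ^+ 2 = (x / (N - 1) + 2 * K) ^+ 2 + (2 * N - 4) * K ^+ 2 ->
 y < a - x / N - eps * om ->
 T <= (N - 1) / N * y -> Z ^+ 2 <= x * T ->
 (N - 1) / N ^+ 2 * x + (N - 2) / N * Z - y / 2 - (N - 2) / (2 * (N - 1)) * T <= Sum ->
 (N - 1) / N * eps * om <= (N - 1) * K + Sum.
Proof.
move=> N4 K0 e0 x0 y0 hom a0 ha hy hT hZ hS.
have N0 : N != 0 by apply/eqP; lra.
have N1 : N - 1 != 0 by apply/eqP; lra.
have N2 : N - 2 != 0 by apply/eqP; lra.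
have hD := @keyD _ _ _ _ N4 K0 x0 a0 ha.
have hQ := @keyQ _ _ _ _ N4 K0 x0 a0 ha.
set D := N * K + 2 * x / N - a in hQ.
have D0 : 0 <= D by rewrite /D subr_ge0.
have om0 : 0 < om.
  rewrite hom; apply: ltr_pwDr; first by nra.
  by apply: divr_ge0; lra.
have yao : y <= a - x / N by nra.
set E' := (N - 1) / (N - 2) * D.
have E'0 : 0 <= E' by apply: mulr_ge0 => //; apply: divr_ge0; lra.
have hZ2 : Z ^+ 2 <= E' ^+ 2.
  apply: (le_trans hZ).
  apply: (@le_trans _ _ (x * ((N - 1) / N * (a - x / N)))).
    apply: ler_wpM2l => //; apply: (le_trans hT); apply: ler_wpM2l => //.
    by apply: divr_ge0; lra.
  have -> : E' ^+ 2 = (N - 1) / (N * (N - 2) ^+ 2) * (N * (N - 1) * D ^+ 2).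
    by rewrite /E'; field; rewrite N0 N2.
  have -> : x * ((N - 1) / N * (a - x / N)) = (N - 1) / (N * (N - 2) ^+ 2) * ((N - 2) ^+ 2 * x * (a - x / N)).
    by field; rewrite N0 N2.
  apply: ler_wpM2l => //; apply: divr_ge0; nra.
have hZE : - E' <= Z by nra.
have h1 : (N - 2) / N * (- E') <= (N - 2) / N * Z.
  by apply: ler_wpM2l => //; apply: divr_ge0; lra.
have h2 : (N - 2) / (2 * (N - 1)) * T <= (N - 2) / (2 * (N - 1)) * ((N - 1) / N * y).
  by apply: ler_wpM2l => //; apply: divr_ge0; lra.
have e1 : (N - 2) / N * (- E') = - ((N - 1) / N * D) by rewrite /E'; field; rewrite N0 N2.
have e2 : (N - 2) / (2 * (N - 1)) * ((N - 1) / N * y) = (N - 2) / (2 * N) * y.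
  by field; rewrite N0 N1.
have e3 : (N - 1) * K + ((N - 1) / N ^+ 2 * x - (N - 1) / N * D - y / 2 - (N - 2) / (2 * N) * y)
   = (N - 1) / N * (a - x / N - y).
  by rewrite /D; field; rewrite N0.
have h3 : (N - 1) / N * (eps * om) <= (N - 1) / N * (a - x / N - y).
  by apply: ler_wpM2l; [apply: divr_ge0; lra | lra].
rewrite -mulrA.
lra.
Qed.

End Sc.

Section Cs.
Variable R : realType.

Lemma cs p (f g : 'I_p -> R) :
  (\sum_(i < p) f i * g i) ^+ 2 <= (\sum_(i < p) f i ^+ 2) * (\sum_(i < p) g i ^+ 2).
Proof.
have H : 0 <= \sum_(i < p) \sum_(j < p) (f i * g j - f j * g i) ^+ 2.
  by apply: sumr_ge0 => i _; apply: sumr_ge0 => j _; apply: sqr_ge0.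
have E : forall i j, (f i * g j - f j * g i) ^+ 2 =
   f i ^+ 2 * g j ^+ 2 + g i ^+ 2 * f j ^+ 2 - 2 * (f i * g i) * (f j * g j).
  by move=> i j; ring.
have E2 : forall i, \sum_(j < p) (f i * g j - f j * g i) ^+ 2 =
   f i ^+ 2 * (\sum_(j < p) g j ^+ 2) + g i ^+ 2 * (\sum_(j < p) f j ^+ 2)
   - 2 * (f i * g i) * (\sum_(j < p) f j * g j).
  move=> i; rewrite (eq_bigr _ (fun j _ => E i j)) sumrB big_split /=.
  by rewrite -!mulr_sumr.
rewrite (eq_bigr _ (fun i _ => E2 i)) sumrB big_split /= -!mulr_suml in H.
rewrite -mulr_sumr in H. nra.
Qed.

Lemma sum_delta k (i : 'I_k) (F : 'I_k -> R) : \sum_(j < k) (i == j)%:R * F j = F i.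
Proof.
rewrite (bigD1 i) //= eqxx mul1r big1 ?addr0 // => j hj.
by rewrite eq_sym (negbTE hj) mul0r.
Qed.

Lemma ao_entry n (B : 'M[R]_n) : (0 < n)%N ->
  \sum_(i < n) \sum_(j < n) (B i j - (i == j)%:R * \tr B / n%:R) ^+ 2
  = \tr (B *m B^T) - \tr B ^+ 2 / n%:R.
Proof.
move=> n0.
have N0 : n%:R != 0 :> R by rewrite pnatr_eq0 -lt0n.
set c := \tr B / n%:R.
have E : forall i j : 'I_n, (B i j - (i == j)%:R * \tr B / n%:R) ^+ 2
   = B i j * B i j - (i == j)%:R * (2 * B i j * c - c ^+ 2).
  by move=> i j; case: (i == j); rewrite /c /= ?mulr1n ?mulr0n; ring.
under eq_bigr => i _ do under eq_bigr => j _ do rewrite E.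
under eq_bigr => i _ do rewrite sumrB sum_delta.
rewrite sumrB.
have -> : \sum_(i < n) \sum_(j < n) B i j * B i j = \tr (B *m B^T).
  rewrite /mxtrace; apply: eq_bigr => i _; rewrite mxE; apply: eq_bigr => j _.
  by rewrite mxE.
rewrite sumrB -mulr_sumr -mulr_suml sumr_const card_ord.
rewrite -mulr_sumr (_ : \sum_(i < n) B i i = \tr B) // -mulr_natr.
congr (_ - _); rewrite /c; field.
by rewrite N0.
Qed.

End Cs.

Theorem mainTheorem10 (R : realType) (n p : nat) (K eps : R)
  (A : sff R n p) :
  (4 <= n)%N -> 0 < K -> 0 < eps -> sff_sym A ->
  let omega := normH2 A / (n%:R - 1) + 2 * n%:R * K in
  normAo2 A < ao_fun n K (normH2 A) - eps * omega ->
  (forall v : 'cV[R]_n, (v^T *m v) 0 0 = 1 ->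
     (n%:R - 1) / n%:R * eps * omega <= ricci K A v) /\
  (n%:R - 1) / n%:R * eps * omega > eps / n%:R * normH2 A.
Proof.
move=> n4 K0 e0 Asym omega hpinch.
have N4 : 4 <= n%:R :> R by rewrite ler_nat.
have N0 : n%:R != 0 :> R by apply/eqP; lra.
have N1 : n%:R - 1 != 0 :> R by apply/eqP; lra.
have x0 : 0 <= normH2 A by apply: sumr_ge0 => i _; apply: sqr_ge0.
split; last first.
  have -> : (n%:R - 1) / n%:R * eps * omega =
     eps / n%:R * normH2 A + 2 * (n%:R - 1) * eps * K.
    by rewrite /omega; field; rewrite N0 N1.
  rewrite ltrDl; apply: mulr_gt0 => //; apply: mulr_gt0 => //; lra.
move=> v hv0.
have hv : v^T *m v = 1%:M by rewrite [LHS]mx11_scalar hv0.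
have n1 : (1 < n)%N by apply: leq_trans n4.
have n0 : (0 < n)%N by apply: leq_trans n4.
pose h := fun a : 'I_p => meanH A a.
pose q := fun a : 'I_p => (v^T *m A a *m v) 0 0.
pose r := fun a : 'I_p => ((A a *m v)^T *m (A a *m v)) 0 0.
pose S := fun a : 'I_p => \tr (A a *m (A a)^T).
pose b := fun a : 'I_p => q a - h a / n%:R.
pose T := \sum_(a < p) b a ^+ 2.
pose Z := \sum_(a < p) h a * b a.
pose Sum := \sum_(a < p) (h a * q a - r a).
have hric : ricci K A v = (n%:R - 1) * K + Sum by rewrite /ricci hv0 mulr1.
have PA : forall a : 'I_p,
  (n%:R - 1) / n%:R ^+ 2 * h a ^+ 2 + (n%:R - 2) / n%:R * (h a * b a) - (S a - h a ^+ 2 / n%:R) / 2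
    - (n%:R - 2) / (2 * (n%:R - 1)) * b a ^+ 2 <= h a * q a - r a /\
  b a ^+ 2 <= (n%:R - 1) / n%:R * (S a - h a ^+ 2 / n%:R).
  move=> a; apply: perA => //.
    exact: (@F1 R n (A a) v (Asym a) hv).
  exact: (@F2 R n (A a) v (Asym a) hv n1).
have hy : normAo2 A = \sum_(a < p) (S a - h a ^+ 2 / n%:R).
  by rewrite /normAo2; apply: eq_bigr => a _; rewrite /S /h /meanH ao_entry.
have y0 : 0 <= normAo2 A.
  by apply: sumr_ge0 => a _; apply: sumr_ge0 => i _; apply: sumr_ge0 => j _; apply: sqr_ge0.
have hT : T <= (n%:R - 1) / n%:R * normAo2 A.
  rewrite hy mulr_sumr; apply: ler_sum => a _; exact: (PA a).2.
have hZ : Z ^+ 2 <= normH2 A * T by apply: cs.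
have hS : (n%:R - 1) / n%:R ^+ 2 * normH2 A + (n%:R - 2) / n%:R * Z - normAo2 A / 2
    - (n%:R - 2) / (2 * (n%:R - 1)) * T <= Sum.
  apply: (le_trans _ (ler_sum _ (fun a _ => (PA a).1))).
  rewrite !sumrB big_split /= -!mulr_sumr -mulr_suml hy.
  by [].
have a0 : 0 <= a_fun n K (normH2 A) by apply: sqrtr_ge0.
have ha : a_fun n K (normH2 A) ^+ 2 = (normH2 A / (n%:R - 1) + 2 * K) ^+ 2 + (2 * n%:R - 4) * K ^+ 2.
  rewrite /a_fun sqr_sqrtr //; apply: addr_ge0; first exact: sqr_ge0.
  apply: mulr_ge0; [lra | exact: sqr_ge0].
rewrite hric.
apply: (@final R n%:R K (normH2 A) (normAo2 A) T Z (a_fun n K (normH2 A)) Sum eps omega N4 K0 e0 x0 y0 erefl a0 ha hpinch hT hZ hS).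
Qed.
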